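(* Let $G$ be a finitely generated torsion-free nilpotent group with two decompositions $\overline{G}=R_1\times\cdots\times R_m=K_1\times\cdots\times K_m$ into nontrivial rationally indecomposable rational subgroups, ordered so that for each $i$ the restriction of the projection $\alpha_i:\overline{G}\to R_i$ to $K_i$ is an isomorphism $K_i\to R_i$ with inverse the restriction to $R_i$ of the projection $\beta_i:\overline{G}\to K_i$, and $\overline{G}=R_1\times\cdots\times R_{i-1}\times K_i\times R_{i+1}\times\cdots\times R_m$. For each $i$ define $\Theta_i:\overline{G}\to\overline{G}$ by $\Theta_i(r_1r_2\cdots r_m)=r_1\cdots r_{i-1}\,\beta_i(r_i)\,r_{i+1}\cdots r_m$ for $r_j\in R_j$. Then $\Theta_i$ is a normal automorphism of $\overline{G}$.
   Context: An automorphism $\theta$ of a group $H$ is normal if $\theta(x^y)=(\theta(x))^y$ for all $x,y\in H$, where $x^y=y^{-1}xy$. Rational closure, rational subgroup and rational indecomposability: $\overline{G}$ is the Malcev completion of $G$ (torsion-free nilpotent, uniquely divisible, containing $G$, every element having a positive power in $G$); a subgroup is rational if closed under taking $n$-th roots for all $n\ge1$; rationally indecomposable means not a direct product of two nontrivial rational subgroups. *)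

(* Defs.v *)
From Stdlib Require Import Arith List.
Import ListNotations.

Record Group := {
  carrier :> Type;
  gmul : carrier -> carrier -> carrier;
  ginv : carrier -> carrier;
  gone : carrier;
  gmulA : forall x y z, gmul x (gmul y z) = gmul (gmul x y) z;
  gmul1l : forall x, gmul gone x = x;
  gmulVl : forall x, gmul (ginv x) x = gone
}.

Arguments gmul {g}.
Arguments ginv {g}.
Arguments gone {g}.

Section GroupDefs.
Variable T : Group.

Definition conj (x y : T) : T := gmul (ginv y) (gmul x y).
Definition comm (x y : T) : T := gmul (gmul (ginv x) (ginv y)) (gmul x y).

Fixpoint gpow (x : T) (n : nat) : T :=
  match n with 0 => gone | S k => gmul (gpow x k) x end.

Definition subgroup (H : T -> Prop) : Prop :=
  H gone /\ (forall x y, H x -> H y -> H (gmul x y)) /\ (forall x, H x -> H (ginv x)).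

Definition gen (S : T -> Prop) (x : T) : Prop :=
  forall H, subgroup H -> (forall y, S y -> H y) -> H x.

Fixpoint lcs (k : nat) : T -> Prop :=
  match k with
  | 0 => fun _ => True
  | S k' => gen (fun z => exists a b, lcs k' a /\ z = comm a b)
  end.

Definition nilpotent : Prop := exists c, forall x, lcs c x -> x = gone.

Definition torsion_free : Prop :=
  forall x n, 1 <= n -> gpow x n = gone -> x = gone.

Definition uniquely_divisible : Prop :=
  forall x n, 1 <= n -> exists y, gpow y n = x /\ forall z, gpow z n = x -> z = y.

Definition fin_gen_subgroup (G : T -> Prop) : Prop :=
  exists l : list T, forall x, G x <-> gen (fun y => In y l) x.

Definition malcev_completion_of (G : T -> Prop) : Prop :=
  torsion_free /\ nilpotent /\ uniquely_divisible /\ subgroup G /\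
  forall x, exists n, 1 <= n /\ G (gpow x n).

Definition rational (H : T -> Prop) : Prop :=
  subgroup H /\ forall x n, 1 <= n -> H (gpow x n) -> H x.

Definition nontrivial (H : T -> Prop) : Prop := exists x, H x /\ x <> gone.

Fixpoint iprod (r : nat -> T) (n : nat) : T :=
  match n with 0 => gone | S k => gmul (iprod r k) (r k) end.

Definition is_idprod (H : T -> Prop) (F : nat -> T -> Prop) (m : nat) : Prop :=
  (forall j, j < m -> subgroup (F j) /\ forall x, F j x -> H x) /\
  (forall i j x y, i < m -> j < m -> i <> j -> F i x -> F j y ->
      gmul x y = gmul y x) /\
  (forall h, H h -> exists r, (forall j, j < m -> F j (r j)) /\ h = iprod r m) /\
  (forall r s, (forall j, j < m -> F j (r j)) -> (forall j, j < m -> F j (s j)) ->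
      iprod r m = iprod s m -> forall j, j < m -> r j = s j).

Definition rationally_indecomposable (H : T -> Prop) : Prop :=
  ~ exists A B : T -> Prop,
      rational A /\ rational B /\ nontrivial A /\ nontrivial B /\
      is_idprod H (fun j => if Nat.eqb j 0 then A else B) 2.

Definition is_proj (F : nat -> T -> Prop) (m i : nat) (p : T -> T) : Prop :=
  forall r, (forall j, j < m -> F j (r j)) -> p (iprod r m) = r i.

Definition is_hom (f : T -> T) : Prop := forall x y, f (gmul x y) = gmul (f x) (f y).
Definition bijective (f : T -> T) : Prop :=
  (forall x y, f x = f y -> x = y) /\ (forall y, exists x, f x = y).
Definition automorphism (f : T -> T) : Prop := is_hom f /\ bijective f.
Definition normal_aut (f : T -> T) : Prop :=
  automorphism f /\ forall x y, f (conj x y) = conj (f x) y.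

End GroupDefs.

Arguments conj {T}. Arguments comm {T}. Arguments gpow {T}.

(* Main.v *)
Require Import Defs.
From Stdlib Require Import Arith List Lia.

Lemma mulgV {T : Group} (x : T) : gmul x (ginv x) = gone.
Proof.
  rewrite <- (gmul1l T (gmul x (ginv x))).
  rewrite <- (gmulVl T (ginv x)) at 1.
  rewrite <- gmulA, (gmulA _ (ginv x) x), gmulVl, gmul1l. apply gmulVl.
Qed.

Lemma mulg1 {T : Group} (x : T) : gmul x gone = x.
Proof. rewrite <- (gmulVl T x), gmulA, mulgV. apply gmul1l. Qed.

Lemma inv_uniq {T : Group} (a b : T) : gmul a b = gone -> ginv a = b.
Proof.
  intro H. rewrite <- (mulg1 (ginv a)), <- H, gmulA, gmulVl. apply gmul1l.
Qed.

Lemma invg_mul {T : Group} (x y : T) : ginv (gmul x y) = gmul (ginv y) (ginv x).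
Proof.
  apply inv_uniq. rewrite <- gmulA, (gmulA _ y), mulgV, gmul1l. apply mulgV.
Qed.

Lemma invg1 {T : Group} : ginv (@gone T) = gone.
Proof. apply inv_uniq. apply gmul1l. Qed.

Lemma mulKg {T : Group} (x y : T) : gmul (ginv x) (gmul x y) = y.
Proof. rewrite gmulA, gmulVl. apply gmul1l. Qed.

Lemma mulgK {T : Group} (x y : T) : gmul (gmul y x) (ginv x) = y.
Proof. rewrite <- gmulA, mulgV. apply mulg1. Qed.

Lemma mulVgK {T : Group} (x y : T) : gmul (gmul y (ginv x)) x = y.
Proof. rewrite <- gmulA, gmulVl. apply mulg1. Qed.

Lemma mulg_cancel_r {T : Group} (x y c : T) : gmul x c = gmul y c -> x = y.
Proof. intro H. rewrite <- (mulgK c x), H. apply mulgK. Qed.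

Lemma hom_one {T : Group} (f : T -> T) : is_hom T f -> f gone = gone.
Proof.
  intro H. apply (mulg_cancel_r _ _ (f gone)). rewrite <- H, !gmul1l. reflexivity.
Qed.

Lemma hom_inv {T : Group} (f : T -> T) x : is_hom T f -> f (ginv x) = ginv (f x).
Proof.
  intro H. symmetry. apply inv_uniq. rewrite <- H, mulgV. apply hom_one, H.
Qed.

Lemma iprod_ext {T : Group} (r s : nat -> T) n :
  (forall j, j < n -> r j = s j) -> iprod T r n = iprod T s n.
Proof.
  induction n; intros H; simpl; auto.
  rewrite IHn by (intros; apply H; lia). rewrite H by lia. reflexivity.
Qed.

Lemma comm_iprod {T : Group} (c : T) s n :
  (forall j, j < n -> gmul c (s j) = gmul (s j) c) ->
  gmul c (iprod T s n) = gmul (iprod T s n) c.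
Proof.
  induction n; intros H; simpl.
  - rewrite gmul1l. apply mulg1.
  - rewrite gmulA, IHn by (intros; apply H; lia).
    rewrite <- !gmulA, H by lia. reflexivity.
Qed.

Lemma iprod_mul {T : Group} (r s : nat -> T) n :
  (forall j k, j < n -> k < n -> j <> k -> gmul (r j) (s k) = gmul (s k) (r j)) ->
  gmul (iprod T r n) (iprod T s n) = iprod T (fun j => gmul (r j) (s j)) n.
Proof.
  induction n; intros H; simpl.
  - apply gmul1l.
  - rewrite <- IHn by (intros; apply H; lia).
    rewrite <- !gmulA. f_equal. rewrite !gmulA. f_equal.
    apply comm_iprod. intros; apply H; lia.
Qed.

Lemma iprod_single {T : Group} (a : T) i n :
  iprod T (fun j => if Nat.eqb j i then a else gone) n =
  if Nat.ltb i n then a else gone.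
Proof.
  induction n; simpl; auto.
  rewrite IHn. destruct (Nat.ltb_spec i n), (Nat.eqb_spec n i), (Nat.ltb_spec i (S n));
    simpl; try lia; try apply mulg1; subst; try apply gmul1l; try (rewrite mulg1; reflexivity).
Qed.

Lemma iprod_replace {T : Group} (r r' : nat -> T) i n :
  (forall j, j < n -> j <> i -> r' j = r j) ->
  (forall j, j < n -> j <> i -> gmul (r i) (r j) = gmul (r j) (r i)) ->
  (forall j, j < n -> j <> i -> gmul (r' i) (r j) = gmul (r j) (r' i)) ->
  (i < n -> iprod T r' n = gmul (gmul (iprod T r n) (ginv (r i))) (r' i)) /\
  (n <= i -> iprod T r' n = iprod T r n).
Proof.
  induction n; intros H1 H2 H3; simpl.
  - split; intros; [lia | reflexivity].
  - destruct IHn as [IH1 IH2]; [intros; apply H1; lia | intros; apply H2; lia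
       | intros; apply H3; lia |].
    split; intros Hi.
    + destruct (Nat.eq_dec i n).
      * subst. rewrite IH2 by lia. rewrite mulgK. reflexivity.
      * rewrite IH1 by lia. rewrite (H1 n) by lia.
        rewrite <- !gmulA. f_equal.
        assert (E : gmul (ginv (r i)) (r n) = gmul (r n) (ginv (r i))).
        { apply (mulg_cancel_r _ _ (r i)). rewrite mulVgK, <- gmulA, <- (H2 n) by lia. apply mulKg. }
        rewrite (H3 n), gmulA, E, <- gmulA by lia. reflexivity.
    + rewrite IH2 by lia. rewrite (H1 n) by lia. reflexivity.
Qed.

Lemma proj_hom {T : Group} F m i p :
  is_idprod T (fun _ => True) F m -> i < m -> is_proj T F m i p -> is_hom T p.
Proof.
  intros [HS [HC [HE HU]]] Hi Hp x y.
  destruct (HE x I) as [r [Hr ->]]. destruct (HE y I) as [s [Hs ->]].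
  rewrite iprod_mul by (intros; apply (HC j k); auto).
  rewrite !Hp; auto.
  intros j Hj. destruct (HS j Hj) as [[_ [Hm _]] _]. apply Hm; auto.
Qed.

Lemma proj_in {T : Group} F m i p x :
  is_idprod T (fun _ => True) F m -> i < m -> is_proj T F m i p -> F i (p x).
Proof.
  intros [HS [HC [HE HU]]] Hi Hp.
  destruct (HE x I) as [r [Hr ->]]. rewrite Hp; auto.
Qed.

Lemma proj_id {T : Group} F m i p a :
  is_idprod T (fun _ => True) F m -> i < m -> is_proj T F m i p -> F i a -> p a = a.
Proof.
  intros [HS [HC [HE HU]]] Hi Hp Ha.
  pose proof (iprod_single a i m) as E.
  destruct (Nat.ltb_spec i m); try lia.
  rewrite <- E, Hp; auto.
  - rewrite Nat.eqb_refl; auto.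
  - intros j Hj. destruct (Nat.eqb_spec j i); subst; auto.
    destruct (HS j Hj) as [[H1 _] _]; auto.
Qed.

Theorem mainTheorem6
  (Gb : Group) (G : Gb -> Prop)
  (HG : fin_gen_subgroup Gb G)
  (Hmal : malcev_completion_of Gb G)
  (m : nat) (R K : nat -> Gb -> Prop)
  (HR : is_idprod Gb (fun _ => True) R m)
  (HK : is_idprod Gb (fun _ => True) K m)
  (HRf : forall j, j < m -> rational Gb (R j) /\ nontrivial Gb (R j) /\
                           rationally_indecomposable Gb (R j))
  (HKf : forall j, j < m -> rational Gb (K j) /\ nontrivial Gb (K j) /\
                           rationally_indecomposable Gb (K j))
  (alpha beta : nat -> Gb -> Gb)
  (Halpha : forall i, i < m -> is_proj Gb R m i (alpha i))
  (Hbeta : forall i, i < m -> is_proj Gb K m i (beta i))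
  (Hiso : forall i, i < m ->
     (forall x, K i x -> R i (alpha i x) /\ beta i (alpha i x) = x) /\
     (forall y, R i y -> K i (beta i y) /\ alpha i (beta i y) = y))
  (Hexch : forall i, i < m ->
     is_idprod Gb (fun _ => True) (fun j => if Nat.eqb j i then K i else R j) m)
  (i : nat) (Hi : i < m) (Theta : Gb -> Gb)
  (HTheta : forall r, (forall j, j < m -> R j (r j)) ->
     Theta (iprod Gb r m) =
     iprod Gb (fun j => if Nat.eqb j i then beta i (r i) else r j) m) :
  normal_aut Gb Theta.
Proof.
  pose proof (Halpha i Hi) as Pa. pose proof (Hbeta i Hi) as Pb.
  destruct (Hiso i Hi) as [_ Hab].
  set (a := alpha i) in *. set (b := beta i) in *.
  assert (ha : is_hom Gb a) by exact (proj_hom _ _ _ _ HR Hi Pa).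
  assert (hb : is_hom Gb b) by exact (proj_hom _ _ _ _ HK Hi Pb).
  pose proof HR as [HRS [HRC [HRE HRU]]].
  pose proof (Hexch i Hi) as [_ [HXC _]].
  assert (Rsub : forall j, j < m -> subgroup Gb (R j)) by (intros j Hj; apply (HRS j Hj)).
  assert (ain : forall x, R i (a x)) by (intro x; exact (proj_in _ _ _ _ x HR Hi Pa)).
  assert (aid : forall r, R i r -> a r = r) by (intros r Hr; exact (proj_id _ _ _ _ r HR Hi Pa Hr)).
  assert (KRc : forall j k y, j < m -> j <> i -> K i k -> R j y -> gmul k y = gmul y k).
  { intros j k y Hj Hji Hk Hy.
    pose proof (HXC i j k y Hi Hj (fun e => Hji (eq_sym e))) as H.
    rewrite Nat.eqb_refl in H. destruct (Nat.eqb_spec j i); [contradiction|].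
    apply H; auto. }
  set (z := fun r => gmul (ginv r) (b r)).
  assert (Tf : forall x, Theta x = gmul x (z (a x))).
  { intro x. destruct (HRE x I) as [r [Hr ->]].
    rewrite HTheta by auto.
    unfold a; rewrite Pa by auto. fold a.
    set (r' := fun j => if Nat.eqb j i then b (r i) else r j).
    destruct (iprod_replace r r' i m) as [E _].
    - intros j Hj Hji. unfold r'. destruct (Nat.eqb_spec j i); [contradiction|auto].
    - intros j Hj Hji. apply (HRC i j); auto.
    - intros j Hj Hji. unfold r'. rewrite Nat.eqb_refl.
      apply (KRc j); auto. apply Hab; auto.
    - rewrite E by auto. unfold r', z. rewrite Nat.eqb_refl. apply eq_sym, gmulA. }
  assert (az : forall r, R i r -> a (z r) = gone).
  { intros r Hr. unfold z. rewrite ha, hom_inv, aid by auto.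
    destruct (Hab r Hr) as [_ ->]. apply gmulVl. }
  assert (zc : forall r y, R i r -> gmul (z r) y = gmul y (z r)).
  { intros r y Hr. destruct (HRE y I) as [s [Hs ->]].
    apply comm_iprod. intros j Hj.
    destruct (Nat.eq_dec j i) as [->|Hji].
    - destruct (HRE (z r) I) as [t [Ht Et]].
      assert (ti : t i = gone).
      { rewrite <- (az r Hr), Et. unfold a. rewrite Pa; auto. }
      rewrite Et. symmetry. apply comm_iprod. intros k Hk.
      destruct (Nat.eq_dec k i) as [->|Hki].
      + rewrite ti, gmul1l. apply mulg1.
      + apply (HRC i k); auto.
    - unfold z.
      assert (c1 : gmul (ginv r) (s j) = gmul (s j) (ginv r)).
      { apply (HRC i j); auto. apply (Rsub i Hi); auto. }
      assert (c2 : gmul (b r) (s j) = gmul (s j) (b r)).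
      { apply (KRc j); auto. apply Hab; auto. }
      rewrite <- gmulA, c2, gmulA, c1, gmulA. reflexivity. }
  assert (zh : forall r s, R i r -> R i s -> z (gmul r s) = gmul (z r) (z s)).
  { intros r s Hr Hs. unfold z at 1. rewrite hb, invg_mul.
    rewrite <- gmulA, (gmulA _ (ginv r)).
    change (gmul (ginv r) (b r)) with (z r).
    rewrite gmulA, <- zc, <- gmulA by auto. reflexivity. }
  assert (z1 : z gone = gone).
  { unfold z. rewrite (hom_one b hb), invg1. apply gmul1l. }
  assert (Rmul : forall x y, R i x -> R i y -> R i (gmul x y))
    by (intros; apply (Rsub i Hi); auto).
  assert (Rinv : forall x, R i x -> R i (ginv x))
    by (intros; apply (Rsub i Hi); auto).
  split; [split|].
  - intros x y. rewrite !Tf, ha, zh by auto.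
    rewrite <- !gmulA. f_equal. rewrite (gmulA _ (z (a x)) y), (zc (a x) y), <- gmulA by auto.
    reflexivity.
  - split.
    + intros x y E. rewrite !Tf in E.
      assert (Ea : a x = a y).
      { assert (H := f_equal a E). rewrite !ha, !az, !mulg1 in H by auto. exact H. }
      rewrite Ea in E. exact (mulg_cancel_r _ _ _ E).
    + intro y. exists (gmul y (ginv (z (a y)))).
      rewrite Tf, ha, (hom_inv a _ ha), (az _ (ain y)), invg1, mulg1. apply mulVgK.
  - intros x y. unfold conj. rewrite !Tf, !ha, hom_inv by auto.
    rewrite !zh by auto.
    rewrite (gmulA _ (z (ginv (a y)))), <- (zc (a x) (z (ginv (a y)))) by auto.
    rewrite <- (gmulA _ (z (a x))), <- (zh (ginv (a y)) (a y)), gmulVl, z1, mulg1 by auto.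
    rewrite <- (gmulA _ x (z (a x)) y), (zc (a x) y (ain x)), !gmulA. reflexivity.
Qed.
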